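(* The map $\mu$ defined in the context is a probability kernel from $\mathsf{X}$ to $\mathsf{X}$; that is, $\mu(\cdot,B)$ is Borel measurable on $\mathsf{X}$ for every Borel $B\subseteq\mathsf{X}$, and $\mu(\mathsf{x},\cdot)$ is a probability measure on the Borel sets of $\mathsf{X}$ for every $\mathsf{x}\in\mathsf{X}$.
   Context: Fix $\theta_a,\theta_d>0$, positive integers $n,N$, $E=\mathbb{R}^N$, and a Borel probability measure $\eta$ on $E$ with finite mean. For a positive integer $k$, $[k]=\{0,\dots,k-1\}$. Elements of $\{0,1\}^{[n]}$ and $E^{[n+1]}$ are functions; $|\psi|=\sum_{i\in[n]}\psi(i)$. The state space is $\mathsf{X}=\{(\psi,\mathbf{v})\in\{0,1\}^{[n]}\times E^{[n+1]}:\sum_{i\in[n]}\psi(i)(\mathbf{v}(i)-\mathbf{v}(n))=0\}$ with the subspace topology of the product topology (discrete on $\{0,1\}$, Euclidean on $E$). For $i\in[n]$: $r_i(\psi)=\frac{\theta_d\psi(i)+\theta_a(1-\psi(i))}{\theta_d|\psi|+\theta_a(n-|\psi|)}$, and $s_i(\psi)$ agrees with $\psi$ except $s_i(\psi)(i)=1-\psi(i)$. For $\mathsf{x}=(\psi,\mathbf{v})\in\mathsf{X}$ and $i\in[n]$, let $\lambda_i^{\mathsf{x}}$ be the Borel measure on $\{0,1\}^{[n]}\times E^{[n+1]}$ given as the law of $(s_i(\psi),\mathbf{w})$, where $\mathbf{w}(j)=\mathbf{v}(j)$ for $j\in[n]\setminus\{i\}$ and $(\mathbf{w}(i),\mathbf{w}(n))$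 equals: $(\mathbf{v}(i),\mathbf{v}(n))$ if $|\psi|=\psi(i)=1$; $(\mathbf{v}(i),\mathbf{v}(n)-\frac{\mathbf{v}(i)-\mathbf{v}(n)}{|\psi|-1})$ if $|\psi|>\psi(i)=1$; $(\mathbf{x}+\mathbf{v}(n),\frac{\mathbf{x}}{|\psi|+1}+\mathbf{v}(n))$ with $\mathbf{x}\sim\eta$ if $\psi(i)=0$. Define $\mu(\mathsf{x},B)=\sum_{i\in[n]}r_i(\psi)\lambda_i^{\mathsf{x}}(B)$ for Borel sets $B\subseteq\mathsf{X}$ (i.e. the restriction of $\sum_i r_i(\psi)\lambda_i^{\mathsf{x}}$ to Borel subsets of $\mathsf{X}$). *)

(* Defs.v *)
From HB Require Import structures.
From mathcomp Require Import all_boot all_order all_algebra.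
From mathcomp Require Import all_classical all_reals all_analysis measurable_realfun.
Set Implicit Arguments. Unset Strict Implicit. Unset Printing Implicit Defensive.
Import Order.TTheory GRing.Theory Num.Theory.
Import numFieldNormedType.Exports.
Local Open Scope classical_set_scope.
Local Open Scope ring_scope.

Section Model.
Variables (R : realType) (n N : nat).

Definition Evec := 'rV[R]_N.
Definition Eborel := g_sigma_algebraType (@open 'rV[R]_N).

Definition Psi := prod_topology (fun _ : 'I_n => bool).
Definition Vs := prod_topology (fun _ : 'I_n.+1 => 'rV[R]_N).
Definition Amb := (Psi * Vs)%type.

(** index i in [n] seen inside [n+1]; index n is ord_max *)
Definition vidx (i : 'I_n) : 'I_n.+1 := widen_ord (leqnSn n) i.

Definition card_psi (psi : Psi) : nat := (\sum_(i < n) psi i)%N.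

Definition inX : set Amb :=
  [set x : Amb | \sum_(i < n) ((nat_of_bool (x.1 i))%:R : R) *: (x.2 (vidx i) - x.2 ord_max) = 0].

Definition XBorel : set (set Amb) := <<s inX, [set inX `&` U | U in @open Amb] >>.

Definition rate (ta td : R) (psi : Psi) (i : 'I_n) : R :=
  (if psi i then td else ta) /
  (td * (card_psi psi)%:R + ta * (n - card_psi psi)%:R).

Definition flip (psi : Psi) (i : 'I_n) : Psi :=
  fun j => if j == i then ~~ psi i else psi j.

Definition upd (v : Vs) (i : 'I_n) (a b : 'rV[R]_N) : Vs :=
  fun j => if j == ord_max then b else if j == vidx i then a else v j.

(** lambda_i^x(B): law of (s_i(psi), w) *)
Definition lam (eta : set Eborel -> \bar R) (x : Amb) (i : 'I_n)
    (B : set Amb) : \bar R :=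
  let psi := x.1 in let v := x.2 in let k := card_psi psi in
  if psi i then
    if k == 1%N then
      ((\1_B ((flip psi i, upd v i (v (vidx i)) (v ord_max)) : Amb) : R))%:E
    else
      ((\1_B ((flip psi i,
         upd v i (v (vidx i))
           (v ord_max - (k.-1)%:R^-1 *: (v (vidx i) - v ord_max))) : Amb) : R))%:E
  else
    eta [set y : Eborel | B ((flip psi i,
         upd v i ((y : 'rV[R]_N) + v ord_max)
                 ((k.+1)%:R^-1 *: (y : 'rV[R]_N) + v ord_max)) : Amb)].

Definition mu (ta td : R) (eta : set Eborel -> \bar R) (x : Amb)
    (B : set Amb) : \bar R :=
  (\sum_(i < n) (rate ta td x.1 i)%:E * lam eta x i B)%E.

End Model.

Definition measurable_on {T} {R : realType} (D : set T) (S : set (set T))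
    (f : T -> \bar R) : Prop :=
  forall A : set (\bar R), measurable A -> S (D `&` f @^-1` A).

Definition probability_on {T} {R : realType} (D : set T) (S : set (set T))
    (m : set T -> \bar R) : Prop :=
  [/\ m set0 = 0%E,
      (forall A, S A -> (0 <= m A)%E),
      (forall F : (set T)^nat, (forall k, S (F k)) -> trivIset setT F ->
          (fun k => (\sum_(0 <= j < k) m (F j))%E) @ \oo --> m (\bigcup_k F k))
    & m D = 1%E].

(* Main.v *)
Require Import Defs.
From HB Require Import structures.
From mathcomp Require Import all_boot all_order all_algebra.
From mathcomp Require Import all_classical all_reals all_analysis measurable_realfun.
From mathcomp Require Import ring lra.
Import Order.TTheory GRing.Theory Num.Theory.
Import numFieldNormedType.Exports.
Local Open Scope classical_set_scope.
Local Open Scope ring_scope.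
Section Box.
Context (I : eqType) (K : I -> topologicalType).

Lemma box_nbhs (f : prod_topology K) (A : set (prod_topology K)) :
  nbhs f A -> exists U : forall i, set (K i),
    (forall i, nbhs (f i) (U i)) /\ [set g | forall i, U i (g i)] `<=` A.
Proof.
pose F := [set B : set (prod_topology K) | exists U : forall i, set (K i),
    (forall i, nbhs (f i) (U i)) /\ [set g | forall i, U i (g i)] `<=` B].
have FF : Filter F.
  constructor.
  - by exists (fun _ => setT); split => // i; exact: filterT.
  - move=> P Q [U [HU sU]] [V [HV sV]]; exists (fun i => U i `&` V i); split.
      by move=> i; apply: filterI.
    by move=> g Hg; split; [apply: sU => i; case: (Hg i)|apply: sV => i; case: (Hg i)].
  - by move=> P Q PQ [U [HU sU]]; exists U; split => //; apply: subset_trans PQ.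
suff : cvg_to F (nbhs f) by move=> /(_ A); apply.
have := @cvg_sup _ _ (fun i => Topological.class (initial_topology (fun g : (forall i, K i) => g i))) F f FF.
move=> [_ H]; apply: H => i.
move=> B /= nB.
case: nB => O [oO Of] OB.
case: oO => A' oA' AO.
exists (dfwith (fun j => setT) i A'); split.
  move=> j; have [->|ji] := eqVneq j i.
    rewrite dfwithin; apply: open_nbhs_nbhs; split => //.
    by move: Of; rewrite -AO.
  by rewrite dfwithout 1?eq_sym //; exact: filterT.
move=> g Hg; apply: OB; rewrite -AO /=.
by have := Hg i; rewrite dfwithin.
Qed.
End Box.

Section BoxFin.
Context (I : finType) (K : I -> topologicalType).

Lemma nbhs_box (f : prod_topology K) (U : forall i, set (K i)) :
  (forall i, nbhs (f i) (U i)) -> nbhs f [set g | forall i, U i (g i)].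
Proof.
move=> HU; apply: (@filter_forall _ I (fun i (g : prod_topology K) => U i (g i)) _ (nbhs_filter f)) => i.
have := @proj_continuous I K i f; move=> /(_ (U i) (HU i)); apply.
Qed.

Lemma prod_continuous (T : topologicalType) (H : T -> prod_topology K) :
  (forall i, continuous (fun z => H z i)) -> continuous H.
Proof.
move=> cH z A /= /box_nbhs [U [HU sU]].
apply: (@filterS _ _ _ [set w | forall i, U i (H w i)]).
  by move=> w Hw; apply: sU.
apply: (@filter_forall _ I (fun i w => U i (H w i)) _ (nbhs_filter z)) => i; exact: (cH i z _ (HU i)).
Qed.
End BoxFin.

Section Model.
Variables (R : realType) (n N : nat).
Local Notation Amb := (Amb R n N).
Local Notation inX := (@inX R n N).
Local Notation XBorel := (@XBorel R n N).

Definition SX : set (set Amb) := [set A | XBorel (inX `&` A)].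
Definition AmbX := g_sigma_algebraType SX.

Lemma XBorel_sigma : sigma_algebra inX XBorel.
Proof. exact: smallest_sigma_algebra. Qed.

Lemma SX_sigma : sigma_algebra setT SX.
Proof.
have [h0 hC hU] := XBorel_sigma.
split.
- by rewrite /SX /= setI0.
- move=> A; rewrite /SX /= setTD => HA.
  by rewrite -setDE; have := hC _ HA; rewrite setDIr setDv set0U.
- move=> F HF; rewrite /SX /= setI_bigcupr; exact: hU.
Qed.

Lemma measurable_AmbXE (A : set AmbX) : measurable A <-> XBorel (inX `&` A).
Proof.
by rewrite /measurable /= sigma_algebra_id //; exact: SX_sigma.
Qed.


Local Notation Psi := (Psi n).
Local Notation Vs := (Vs R n N).

Lemma Psi_open (A : set Psi) : open A.
Proof.
rewrite openE => psi Apsi; rewrite /interior.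
apply: (@filterS _ _ _ [set g : Psi | forall i, [set psi i] (g i)]).
  by move=> g Hg; have -> : g = psi by apply/funext => i; exact: Hg.
by apply: (@nbhs_box _ (fun _ : 'I_n => bool) psi (fun i => [set psi i])) => i.
Qed.

Lemma Psi_nbhs (psi : Psi) (A : set Psi) : A psi -> nbhs psi A.
Proof. by move=> Ap; apply: open_nbhs_nbhs; split => //; exact: Psi_open. Qed.

Lemma Psi_cont (T : topologicalType) (h : Psi -> T) : continuous h.
Proof.
move=> psi B /= hB; apply: Psi_nbhs => /=; exact: nbhs_singleton.
Qed.

Local Notation P := (Amb * 'rV[R]_N)%type.

Lemma cont_psi (T : topologicalType) (h : Psi -> T) :
  continuous (fun z : P => h z.1.1).
Proof.
move=> z; apply: (@continuous_comp _ _ _ (fun z : P => z.1.1) h); last exact: Psi_cont.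
apply: (@continuous_comp _ _ _ fst fst); exact: cvg_fst.
Qed.


Definition Hgen (i : 'I_n) (a b : P -> 'rV[R]_N) (z : P) : Amb :=
  (flip z.1.1 i, upd z.1.2 i (a z) (b z)).

Lemma cont_v (j : 'I_n.+1) : continuous (fun z : P => z.1.2 j).
Proof.
move=> z; apply: (@continuous_comp _ _ _ (fun z : P => z.1.2) (fun v : Vs => v j)).
  apply: (@continuous_comp _ _ _ fst snd); [exact: cvg_fst| exact: cvg_snd].
exact: (@proj_continuous _ (fun _ : 'I_n.+1 => 'rV[R]_N) j).
Qed.

Lemma cont_y : continuous (fun z : P => z.2).
Proof. move=> z; exact: cvg_snd. Qed.

Lemma cont_Hgen i a b : continuous a -> continuous b -> continuous (Hgen i a b).
Proof.
move=> ca cb z.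
have h1 : (fun z : P => flip z.1.1 i) @ z --> flip z.1.1 i.
  exact: (@cont_psi Psi (fun psi => flip psi i) z).
have h2 : (fun z : P => upd z.1.2 i (a z) (b z)) @ z --> upd z.1.2 i (a z) (b z).
  have := @prod_continuous _ (fun _ : 'I_n.+1 => 'rV[R]_N) _ (fun z : P => upd z.1.2 i (a z) (b z)).
  apply => // j; rewrite /upd.
  case: (j == ord_max) => //; case: (j == vidx i) => //; exact: cont_v.
exact: (cvg_pair h1 h2).
Qed.


Definition ratmx (c : 'rV[rat]_N) : 'rV[R]_N := map_mx ratr c.
Definition rad (m : nat) : R := (m.+1%:R)^-1.

Lemma rad_gt0 m : 0 < rad m.
Proof. by rewrite /rad invr_gt0 ltr0n. Qed.

Lemma rV_approx (r : R) : 0 < r ->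
  exists f : 'rV[R]_N -> 'rV[rat]_N, forall v, ball (ratmx (f v)) r v.
Proof.
move=> r0.
have : forall x : R, exists q : rat, `|ratr q - x| < r.
  move=> x; have /rat_in_itvoo[q] : x < x + r by rewrite ltrDl.
  rewrite in_itv /= => /andP[q1 q2].
  exists q; rewrite ltr_distl; apply/andP; split.
    by rewrite (lt_trans _ q1) // ltrBlDr ltrDl.
  exact: q2.
move=> /choice [g Hg]; exists (map_mx g) => v; split => // i j.
rewrite /ratmx !mxE.
rewrite /ball /=.
have := Hg (v i j).
by [].
Qed.


Definition Qt := ({ffun 'I_n -> bool} * {ffun 'I_n.+1 -> 'rV[rat]_N} * 'rV[rat]_N * nat)%type.

Definition CellA (q : Qt) : set Amb :=
  [set x | x.1 = (fun i => q.1.1.1 i) /\ forall j, ball (ratmx (q.1.1.2 j)) (rad q.2) (x.2 j)].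
Definition CellB (q : Qt) : set 'rV[R]_N := ball (ratmx q.1.2) (rad q.2).

Lemma open_CellA q : open (CellA q).
Proof.
rewrite openE => x [x1 x2]; rewrite /interior.
have : nbhs (x.1, x.2) (CellA q); last by case: x {x1 x2}.
apply: (@filter_pair_set _ _ _ _ _ _ [set psi | psi = (fun i => q.1.1.1 i)]
   [set v : Vs | forall j, ball (ratmx (q.1.1.2 j)) (rad q.2) (v j)]).
- by move=> a b /= ha hb; split.
split; first exact: Psi_nbhs.
apply: (@nbhs_box _ (fun _ : 'I_n.+1 => 'rV[R]_N) x.2
   (fun j => ball (ratmx (q.1.1.2 j)) (rad q.2))) => j.
by apply: open_nbhs_nbhs; split => //; exact: ball_open.
Qed.


Local Notation PX := (AmbX * Eborel R N)%type.

Lemma open_measurableX (A : set Amb) : open A -> measurable (A : set AmbX).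
Proof.
move=> oA; apply/measurable_AmbXE; apply: sub_sigma_algebra.
by exists A.
Qed.

Lemma open_measurableE (B : set 'rV[R]_N) : open B -> measurable (B : set (Eborel R N)).
Proof. by move=> oB; apply: sub_sigma_algebra. Qed.

Lemma measurable_Cell q : measurable ((CellA q `*` CellB q) : set PX).
Proof.
apply: measurableX.
  apply: open_measurableX; exact: open_CellA.
apply: open_measurableE; exact: ball_open.
Qed.


Lemma ev_ball (c : 'rV[R]_N) (S : set 'rV[R]_N) :
  nbhs c S -> \forall m \near \oo, ball c (rad m + rad m) `<=` S.
Proof.
move=> /nbhs_ballP [e e0 eS].
have e2 : 0 < e / 2 by rewrite divr_gt0.
have [M _ HM] := near_infty_natSinv_lt (PosNum e2).
exists M => //.
move=> m Mm; have /= hm := HM m Mm; apply: subset_trans eS; apply: le_ball.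
by rewrite [e in _ <= e](splitr e) ltW // ltrD.
Qed.

Lemma crux (W : set P) : open W -> measurable (W : set PX).
Proof.
move=> oW.
pose F k := match unpickle k : option Qt with
  | Some q => if pselect ((CellA q `*` CellB q) `<=` W) then CellA q `*` CellB q else set0
  | None => set0 end.
suff -> : W = \bigcup_k F k.
  apply: bigcupT_measurable => k; rewrite /F; case: (unpickle k) => [q|]; last exact: measurable0.
  by destruct (pselect _); [exact: measurable_Cell| exact: measurable0].
apply/seteqP; split; last first.
  move=> z [k _]; rewrite /F; case: (unpickle k) => [q|] //.
  by destruct (pselect _) as [sW|] => // /sW.
move=> z Wz.
have : nbhs z W by move: oW; rewrite openE => /(_ z Wz).
case=> -[A B] /= [nA nB] sAB.
case: nA => -[A1 A2] /= [nA1 nA2] sA.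
have [U [HU sU]] := @box_nbhs _ (fun _ : 'I_n.+1 => 'rV[R]_N) _ _ nA2.
have ev1 : \forall m \near \oo, forall j, ball (z.1.2 j) (rad m + rad m) `<=` U j.
  apply: (@filter_forall _ _ (fun j m => ball (z.1.2 j) (rad m + rad m) `<=` U j)) => j.
  exact: ev_ball.
have [M _ HM] := filterI ev1 (ev_ball _ _ nB).
have [HU' HB] := HM M (leqnn M).
have [g Hg] := rV_approx _ (rad_gt0 M).
pose q : Qt := ([ffun i => z.1.1 i], [ffun j => g (z.1.2 j)], g z.2, M).
have sW : (CellA q `*` CellB q) `<=` W.
  move=> [x y] [[/= xpsi xv] yb]; apply: sAB; split => /=; last first.
    by apply: HB; apply: ball_triangle (ball_sym (Hg z.2)) yb.
  apply: sA; split => /=.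
    have -> : x.1 = z.1.1 by rewrite xpsi; apply/funext => i; rewrite ffunE.
    exact: nbhs_singleton nA1.
  apply: sU => j; apply: (HU' j).
  by apply: ball_triangle (ball_sym (Hg _)) _; move: (xv j); rewrite /q /= ffunE.
exists (pickle q) => //; rewrite /F pickleK; destruct (pselect _) as [?|nS]; last by case: nS.
split; [split|] => /=.
- by apply/funext => i; rewrite ffunE.
- by move=> j; rewrite ffunE; have := Hg (z.1.2 j).
- by have := Hg z.2.
Qed.


Lemma preimage_meas (H : P -> Amb) (Reg : set Amb) :
  continuous H -> measurable (Reg : set AmbX) ->
  (forall z : P, Reg z.1 -> inX (H z)) ->
  forall B, XBorel B -> measurable (((Reg `*` setT) `&` H @^-1` B) : set PX).
Proof.
move=> cH mReg HX B XB.
have mRT : measurable ((Reg `*` setT) : set PX) by apply: measurableX.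
pose C := [set B : set Amb | measurable (((Reg `*` setT) `&` H @^-1` B) : set PX)].
suff : XBorel `<=` C by apply.
apply: smallest_sub.
  split.
  - by rewrite /C /= preimage_set0 setI0.
  - move=> A CA; rewrite /C /=.
    have -> : (Reg `*` setT) `&` H @^-1` (inX `\` A) =
              (Reg `*` setT) `\` ((Reg `*` setT) `&` H @^-1` A).
      apply/seteqP; split => z /=.
        by move=> [Rz [_ nA]]; split => // -[].
      move=> [Rz nRA]; split => //; split; first exact: HX (Rz.1).
      by move=> hA; apply: nRA.
    exact: measurableD.
  - by move=> F CF; rewrite /C /= preimage_bigcup setI_bigcupr; exact: bigcupT_measurable.
move=> _ [U oU <-]; rewrite /C /=.
have -> : (Reg `*` setT) `&` H @^-1` (inX `&` U) = (Reg `*` setT) `&` H @^-1` U.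
  apply/seteqP; split => z /=; first by move=> [Rz [_ hU]].
  by move=> [Rz hU]; split => //; split => //; exact: HX (Rz.1).
apply: measurableI => //; apply: crux.
by move/continuousP : cH; apply.
Qed.


Lemma upd_vidx (v : Vs) i a b (j : 'I_n) :
  upd v i a b (vidx j) = if j == i then a else v (vidx j).
Proof.
rewrite /upd.
have -> : (vidx j == ord_max) = false.
  by apply/negbTE; rewrite -val_eqE /= neq_ltn ltn_ord.
by have -> : (vidx j == vidx i) = (j == i) by rewrite -val_eqE.
Qed.

Lemma upd_max (v : Vs) i a b : upd v i a b ord_max = b.
Proof. by rewrite /upd eqxx. Qed.

Lemma inXE (x : Amb) : inX x <->
  forall l : 'I_N, \sum_(j < n) ((x.1 j)%:R * (x.2 (vidx j) 0 l - x.2 ord_max 0 l)) = 0.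
Proof.
rewrite /Defs.inX /=; split => [H l | H].
  have := congr1 (fun M : 'rV[R]_N => M 0 l) H; rewrite summxE mxE => E.
  apply: (etrans _ E).
  by apply: eq_bigr => j _; rewrite !mxE.
apply/rowP => l; rewrite summxE mxE; apply: (etrans _ (H l)).
by apply: eq_bigr => j _; rewrite !mxE.
Qed.

Lemma sum_flip (psi : Psi) i (f : 'I_n -> R) (a b : R) :
  \sum_(j < n) ((flip psi i j)%:R * ((if j == i then a else f j) - b)) =
  (~~ psi i)%:R * (a - b) - (psi i)%:R * (f i - b) +
  \sum_(j < n) ((psi j)%:R * (f j - b)).
Proof.
rewrite (bigD1 i) //= [X in _ = _ + X](bigD1 i) //= /flip eqxx.
have -> : \sum_(j < n | j != i) ((if j == i then ~~ psi i else psi j)%:R *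
            ((if j == i then a else f j) - b)) =
          \sum_(j < n | j != i) ((psi j)%:R * (f j - b)).
  by apply: eq_bigr => j /negbTE ->.
ring.
Qed.

Lemma sum_shift (psi : Psi) (f : 'I_n -> R) (b c : R) :
  \sum_(j < n) ((psi j)%:R * (f j - b)) =
  \sum_(j < n) ((psi j)%:R * (f j - c)) + (card_psi psi)%:R * (c - b).
Proof.
rewrite /card_psi natr_sum big_distrl -big_split /=.
by apply: eq_bigr => j _; ring.
Qed.


Lemma inX_Hgen i (a b : P -> 'rV[R]_N) (z : P) : inX z.1 ->
  (forall l : 'I_N, (~~ z.1.1 i)%:R * (a z 0 l - b z 0 l)
     - (z.1.1 i)%:R * (z.1.2 (vidx i) 0 l - b z 0 l)
     + (card_psi z.1.1)%:R * (z.1.2 ord_max 0 l - b z 0 l) = 0) ->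
  inX (Hgen i a b z).
Proof.
move=> /inXE Hz Hab; apply/inXE => l /=.
under eq_bigr do rewrite upd_vidx upd_max (fun_if (fun M : 'rV[R]_N => M 0 l)).
rewrite sum_flip (sum_shift _ _ _ (z.1.2 ord_max 0 l)) Hz add0r; exact: Hab.
Qed.

Lemma card_ge1 (psi : Psi) i : psi i -> (1 <= card_psi psi)%N.
Proof.
by move=> pi; rewrite /card_psi (bigD1 i) //= pi.
Qed.

Lemma card1_other (psi : Psi) i j : psi i -> card_psi psi = 1%N -> j != i -> psi j = false.
Proof.
move=> pi c1 ji; move: c1; rewrite /card_psi (bigD1 i) //= pi add1n => -[].
rewrite (bigD1 j) //=; case: (psi j) => //.
Qed.


Lemma open_fst (Q : set Psi) : open [set x : Amb | Q x.1].
Proof.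
have cf : continuous (fun x : Amb => x.1) by move=> x; exact: cvg_fst.
exact: (proj1 (continuousP _) cf Q (Psi_open Q)).
Qed.

Lemma meas_reg (Q : set Psi) : measurable ((inX `&` [set x : Amb | Q x.1]) : set AmbX).
Proof.
apply/measurable_AmbXE; rewrite setIA setIid; apply: sub_sigma_algebra.
by exists [set x | Q x.1] => //; exact: open_fst.
Qed.

Section Maps.
Variable i : 'I_n.

Definition a1 (z : P) : 'rV[R]_N := z.1.2 (vidx i).
Definition b1 (z : P) : 'rV[R]_N := z.1.2 ord_max.
Definition b2 (z : P) : 'rV[R]_N :=
  z.1.2 ord_max - ((card_psi z.1.1).-1)%:R^-1 *: (z.1.2 (vidx i) - z.1.2 ord_max).
Definition a3 (z : P) : 'rV[R]_N := z.2 + z.1.2 ord_max.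
Definition b3 (z : P) : 'rV[R]_N := ((card_psi z.1.1).+1)%:R^-1 *: z.2 + z.1.2 ord_max.

Definition H1 := Hgen i a1 b1.
Definition H2 := Hgen i a1 b2.
Definition H3 := Hgen i a3 b3.

Lemma cont_H1 : continuous H1.
Proof. by apply: cont_Hgen; exact: cont_v. Qed.

Lemma cont_H2 : continuous H2.
Proof.
apply: cont_Hgen; first exact: cont_v.
move=> z; apply: cvgB; first exact: cont_v.
apply: cvgZ; first exact: (@cont_psi R^o (fun psi => ((card_psi psi).-1)%:R^-1)).
by apply: cvgB; exact: cont_v.
Qed.

Lemma cont_H3 : continuous H3.
Proof.
apply: cont_Hgen => z.
  by apply: cvgD; [exact: cont_y| exact: cont_v].
apply: cvgD; last exact: cont_v.
apply: cvgZ; last exact: cont_y.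
exact: (@cont_psi R^o (fun psi => ((card_psi psi).+1)%:R^-1)).
Qed.


Definition Reg1 : set Amb := [set x | inX x /\ x.1 i /\ card_psi x.1 = 1%N].
Definition Reg2 : set Amb := [set x | inX x /\ x.1 i /\ card_psi x.1 <> 1%N].
Definition Reg3 : set Amb := [set x | inX x /\ ~~ x.1 i].

Lemma inX_H1 (z : P) : Reg1 z.1 -> inX (H1 z).
Proof.
move=> [zX [zi zc]]; apply: inX_Hgen => // l.
move/inXE: zX => /(_ l).
rewrite (bigD1 i) //= big1; last first.
  by move=> j ji; rewrite (card1_other _ _ _ zi zc ji) mul0r.
rewrite zi zc /a1 /b1 /= => E; lra.
Qed.

Lemma inX_H2 (z : P) : Reg2 z.1 -> inX (H2 z).
Proof.
move=> [zX [zi zc]]; apply: inX_Hgen => // l.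
have k2 : (2 <= card_psi z.1.1)%N.
  by have := card_ge1 _ _ zi; rewrite leq_eqVlt eq_sym => /orP[/eqP|].
rewrite /a1 /b2 zi /= !mxE -subn1 natrB ?(leq_trans _ k2) //.
have k1 : (card_psi z.1.1)%:R - 1 != 0 :> R.
  by rewrite subr_eq0 pnatr_eq1; apply/eqP => e; move: k2; rewrite e.
field.
exact: k1.
Qed.

Lemma inX_H3 (z : P) : Reg3 z.1 -> inX (H3 z).
Proof.
move=> [zX zi]; apply: inX_Hgen => // l.
rewrite /a3 /b3 (negbTE zi) /= !mxE.
have k1 : (card_psi z.1.1).+1%:R != 0 :> R by rewrite pnatr_eq0.
field.
by rewrite addrC natr1 pnatr_eq0.
Qed.


Definition D1 (B : set Amb) : set PX := (Reg1 `*` setT) `&` H1 @^-1` B.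
Definition D2 (B : set Amb) : set PX := (Reg2 `*` setT) `&` H2 @^-1` B.
Definition D3 (B : set Amb) : set PX := (Reg3 `*` setT) `&` H3 @^-1` B.

Lemma meas_D1 B : XBorel B -> measurable (D1 B).
Proof.
apply: preimage_meas; [exact: cont_H1| |exact: inX_H1].
exact: (meas_reg (fun psi => psi i /\ card_psi psi = 1%N)).
Qed.

Lemma meas_D2 B : XBorel B -> measurable (D2 B).
Proof.
apply: preimage_meas; [exact: cont_H2| |exact: inX_H2].
exact: (meas_reg (fun psi => psi i /\ card_psi psi <> 1%N)).
Qed.

Lemma meas_D3 B : XBorel B -> measurable (D3 B).
Proof.
apply: preimage_meas; [exact: cont_H3| |exact: inX_H3].
exact: (meas_reg (fun psi => ~~ psi i)).
Qed.

End Maps.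


Section Lam.
Variable eta : probability (Eborel R N) R.

Lemma xsectionD (Reg : set Amb) (H : P -> Amb) (B : set Amb) (x : Amb) :
  xsection (((Reg `*` setT) `&` H @^-1` B) : set PX) x =
  [set y | Reg x /\ B (H (x, y))].
Proof.
apply/seteqP; split => y; rewrite /xsection /= in_setE /=.
  by move=> [[? _] ?].
by move=> [? ?].
Qed.

Lemma eta_ifT (Q : Prop) (S : set 'rV[R]_N) : Q ->
  eta [set y | Q /\ S y] = eta S.
Proof. by move=> q; congr (eta _); apply/seteqP; split => y //= []. Qed.

Lemma eta_ifF (Q : Prop) (S : set 'rV[R]_N) : ~ Q ->
  eta [set y | Q /\ S y] = 0%E.
Proof.
move=> q; have -> : [set y | Q /\ S y] = set0 by apply/seteqP; split => y // [].
exact: measure0.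
Qed.

Lemma eta_const (Q : Prop) : eta [set _ : 'rV[R]_N | Q] = (asbool Q)%:R%:E.
Proof.
have [q|q] := pselect Q.
  have -> : [set _ : 'rV[R]_N | Q] = setT by apply/seteqP; split.
  by rewrite probability_setT asboolT.
have -> : [set _ : 'rV[R]_N | Q] = set0 by apply/seteqP; split.
by rewrite measure0 asboolF.
Qed.

Lemma indic_asbool (B : set Amb) p : \1_B p = (asbool (B p))%:R :> R.
Proof.
rewrite indicE; have [h|h] := pselect (B p).
  by rewrite asboolT // mem_set.
by rewrite asboolF // memNset.
Qed.

Lemma lam_dec i (x : Amb) B : inX x ->
  lam eta x i B = (eta (xsection (D1 i B) x) + eta (xsection (D2 i B) x)
                   + eta (xsection (D3 i B) x))%E.
Proof.
move=> xX; rewrite /D1 /D2 /D3 !xsectionD /lam /=.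
case xi : (x.1 i); case: (eqVneq (card_psi x.1) 1%N) => kc.
- rewrite eta_ifT; last by [].
  rewrite eta_ifF; last by case=> _ [_ /(_ kc)].
  rewrite eta_ifF; last by case=> _; rewrite xi.
  rewrite [X in eta X](_ : _ =
    [set _ : 'rV[R]_N | B (flip x.1 i, upd x.2 i (x.2 (vidx i)) (x.2 ord_max))]) //.
  by rewrite eta_const indic_asbool adde0 adde0.
- rewrite eta_ifF; last by case=> _ [_ /eqP]; rewrite (negbTE kc).
  rewrite eta_ifT; last by split => //; split => //; exact/eqP.
  rewrite eta_ifF; last by case=> _; rewrite xi.
  rewrite [X in eta X](_ : _ =
    [set _ : 'rV[R]_N | B (flip x.1 i, upd x.2 i (x.2 (vidx i)) (x.2 ord_max -
        (card_psi x.1).-1%:R^-1 *: (x.2 (vidx i) - x.2 ord_max)))]) //.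
  by rewrite eta_const indic_asbool add0e adde0.
- rewrite eta_ifF; last by case=> _ []; rewrite xi.
  rewrite eta_ifF; last by case=> _ []; rewrite xi.
  rewrite eta_ifT; last by split => //; rewrite xi.
  by rewrite add0e add0e.
- rewrite eta_ifF; last by case=> _ []; rewrite xi.
  rewrite eta_ifF; last by case=> _ []; rewrite xi.
  rewrite eta_ifT; last by split => //; rewrite xi.
  by rewrite add0e add0e.
Qed.


Lemma psi_meas (h : Psi -> \bar R) : measurable_fun setT (fun x : AmbX => h x.1).
Proof.
move=> _ A mA; rewrite setTI; apply/measurable_AmbXE; apply: sub_sigma_algebra.
by exists [set x | A (h x.1)] => //; exact: (open_fst (fun psi => A (h psi))).
Qed.

Lemma XBorel_inX : XBorel inX.
Proof. by have [h0 hC _] := XBorel_sigma; have := hC _ h0; rewrite setD0. Qed.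

Lemma meas_inX : measurable (inX : set AmbX).
Proof. by apply/measurable_AmbXE; rewrite setIid; exact: XBorel_inX. Qed.

Lemma mu_meas (ta td : R) B : XBorel B ->
  measurable_fun (inX : set AmbX) (fun x : AmbX => mu ta td eta x B).
Proof.
move=> XB.
apply: (@eq_measurable_fun _ _ _ _ _ (fun x : AmbX => \sum_(i < n)
   ((rate ta td x.1 i)%:E * (eta (xsection (D1 i B) x) + eta (xsection (D2 i B) x)
                   + eta (xsection (D3 i B) x)))%E)).
  move=> x; rewrite inE => xX; rewrite /mu; apply: eq_bigr => i _.
  by rewrite lam_dec.
apply: (measurable_funS measurableT) => //.
apply: emeasurable_sum => i.
apply: emeasurable_funM; first exact: (psi_meas (fun psi => (rate ta td psi i)%:E)).
apply: emeasurable_funD; first apply: emeasurable_funD.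
- exact: measurable_fun_xsection (meas_D1 i B XB).
- exact: measurable_fun_xsection (meas_D2 i B XB).
- exact: measurable_fun_xsection (meas_D3 i B XB).
Qed.

Lemma to_on (f : Amb -> \bar R) : measurable_fun (inX : set AmbX) (f : AmbX -> \bar R) ->
  measurable_on inX XBorel f.
Proof.
move=> mf A mA; have := mf meas_inX A mA.
by move/measurable_AmbXE; rewrite setIA setIid.
Qed.


Lemma sec_cvg (Reg : set Amb) (H : P -> Amb) (F : (set Amb)^nat) (x : Amb) :
  (forall B, XBorel B -> measurable (((Reg `*` setT) `&` H @^-1` B) : set PX)) ->
  (forall k, XBorel (F k)) -> trivIset setT F ->
  (fun m => \sum_(0 <= j < m) eta (xsection (((Reg `*` setT) `&` H @^-1` (F j)) : set PX) x))%E
    @ \oo --> eta (xsection (((Reg `*` setT) `&` H @^-1` (\bigcup_k F k)) : set PX) x).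
Proof.
move=> Dm XF tF.
rewrite preimage_bigcup setI_bigcupr xsection_bigcup.
apply: measure_sigma_additive.
  by move=> j; apply: measurable_xsection; apply: Dm.
move=> a b _ _ [y []]; rewrite /xsection /= !in_setE /= => -[_ Fa] [_ Fb].
by apply: tF => //; exists (H (x, y)).
Qed.

Lemma lam_ge0 (i : 'I_n) (x : Amb) (B : set Amb) : (0 <= lam eta x i B)%E.
Proof.
rewrite /lam /=; case: (x.1 i); last exact: measure_ge0.
by case: ifP => _; rewrite indic_asbool lee_fin ler0n.
Qed.

Lemma lam_cvg i (x : Amb) (F : (set Amb)^nat) : inX x ->
  (forall k, XBorel (F k)) -> trivIset setT F ->
  (fun m => \sum_(0 <= j < m) lam eta x i (F j))%E @ \oo --> lam eta x i (\bigcup_k F k).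
Proof.
move=> xX XF tF.
rewrite lam_dec //.
have -> : (fun m => \sum_(0 <= j < m) lam eta x i (F j))%E =
  (fun m => \sum_(0 <= j < m) eta (xsection (D1 i (F j)) x) +
            \sum_(0 <= j < m) eta (xsection (D2 i (F j)) x) +
            \sum_(0 <= j < m) eta (xsection (D3 i (F j)) x))%E.
  by apply/funext => m; rewrite -!big_split /=; apply: eq_bigr => j _; rewrite lam_dec.
apply: cvgeD; first by apply: ge0_adde_def; rewrite inE ?adde_ge0 ?measure_ge0.
  apply: cvgeD; first by apply: ge0_adde_def; rewrite inE ?measure_ge0.
    exact: (sec_cvg _ _ _ _ (meas_D1 i)).
  exact: (sec_cvg _ _ _ _ (meas_D2 i)).
exact: (sec_cvg _ _ _ _ (meas_D3 i)).
Qed.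


Lemma eta_full (Q : set 'rV[R]_N) : (forall y, Q y) -> eta Q = 1%E.
Proof.
by move=> hQ; rewrite (_ : Q = setT) ?probability_setT //; apply/seteqP; split.
Qed.

Lemma lam_inX i (x : Amb) : inX x -> lam eta x i inX = 1%E.
Proof.
move=> xX; rewrite lam_dec // /D1 /D2 /D3 !xsectionD.
case xi : (x.1 i); case: (eqVneq (card_psi x.1) 1%N) => kc.
- rewrite eta_ifT; last by [].
  rewrite eta_ifF; last by case=> _ [_ /(_ kc)].
  rewrite eta_ifF; last by case=> _; rewrite xi.
  by rewrite adde0 adde0; apply: eta_full => y; apply: inX_H1.
- rewrite eta_ifF; last by case=> _ [_ /eqP]; rewrite (negbTE kc).
  rewrite eta_ifT; last by split => //; split => //; exact/eqP.
  rewrite eta_ifF; last by case=> _; rewrite xi.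
  rewrite add0e adde0; apply: eta_full => y; apply: inX_H2.
  by split => //; split => //; exact/eqP.
- rewrite eta_ifF; last by case=> _ []; rewrite xi.
  rewrite eta_ifF; last by case=> _ []; rewrite xi.
  rewrite eta_ifT; last by split => //; rewrite xi.
  by rewrite add0e add0e; apply: eta_full => y; apply: inX_H3; split => //; rewrite xi.
- rewrite eta_ifF; last by case=> _ []; rewrite xi.
  rewrite eta_ifF; last by case=> _ []; rewrite xi.
  rewrite eta_ifT; last by split => //; rewrite xi.
  by rewrite add0e add0e; apply: eta_full => y; apply: inX_H3; split => //; rewrite xi.
Qed.

Lemma card_le (psi : Psi) : (card_psi psi <= n)%N.
Proof.
rewrite /card_psi; apply: (@leq_trans (\sum_(i < n) 1)%N).
  by apply: leq_sum => i _; exact: leq_b1.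
by rewrite sum1_card card_ord.
Qed.

Lemma sum_if (psi : Psi) (ta td : R) :
  \sum_(i < n) (if psi i then td else ta) =
  td * (card_psi psi)%:R + ta * (n - card_psi psi)%:R.
Proof.
rewrite natrB ?card_le // /card_psi natr_sum.
transitivity (\sum_(i < n) (ta + (td - ta) * (psi i)%:R)).
  by apply: eq_bigr => i _; case: (psi i); rewrite /= ?mulr1 ?mulr0 ?addr0 // addrC subrK.
rewrite big_split /= -big_distrr /= sumr_const card_ord.
rewrite -[ta *+ n]mulr_natr; ring.
Qed.

Lemma den_gt0 (psi : Psi) (ta td : R) : (0 < n)%N -> 0 < ta -> 0 < td ->
  0 < td * (card_psi psi)%:R + ta * (n - card_psi psi)%:R.
Proof.
move=> n0 ta0 td0.
have [k0|k0] := posnP (card_psi psi).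
  by rewrite k0 mulr0 add0r subn0 mulr_gt0 // ltr0n.
by rewrite ltr_pwDl ?mulr_gt0 ?ltr0n // mulr_ge0 // ?ltW.
Qed.

Lemma rate_ge0 (psi : Psi) (ta td : R) i : 0 < ta -> 0 < td -> 0 <= rate ta td psi i.
Proof.
move=> ta0 td0; rewrite /rate divr_ge0 //; first by case: ifP => _; exact: ltW.
by rewrite addr_ge0 // mulr_ge0 // ltW.
Qed.

Lemma rate_sum (psi : Psi) (ta td : R) : (0 < n)%N -> 0 < ta -> 0 < td ->
  \sum_(i < n) rate ta td psi i = 1.
Proof.
move=> n0 ta0 td0; rewrite /rate -mulr_suml sum_if divff //.
by rewrite gt_eqF // den_gt0.
Qed.

End Lam.

End Model.

Theorem proposition1 (R : realType) (n N : nat) (theta_a theta_d : R)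
    (eta : probability (Eborel R N) R) :
  (0 < n)%N -> (0 < N)%N -> 0 < theta_a -> 0 < theta_d ->
  (\int[eta]_y (`|(y : 'rV[R]_N)|)%:E < +oo)%E ->
  (forall B : set (Amb R n N), @XBorel R n N B ->
     measurable_on (@inX R n N) (@XBorel R n N)
       (fun x => mu theta_a theta_d eta x B)) /\
  (forall x : Amb R n N, @inX R n N x ->
     probability_on (@inX R n N) (@XBorel R n N)
       (fun B => mu theta_a theta_d eta x B)).
Proof.
move=> n0 _ ta0 td0 _; split.
  by move=> B XB; apply: to_on; exact: mu_meas.
move=> x xX; split.
- rewrite /mu big1 // => i _.
  rewrite lam_dec //.
  have E : forall (Reg : set (Amb R n N)) (H : (Amb R n N * 'rV[R]_N)%type -> Amb R n N),
      eta (xsection (((Reg `*` setT) `&` H @^-1` set0) : set (AmbX R n N * Eborel R N)%type) x) = 0%E.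
    move=> Reg H; rewrite preimage_set0 setI0.
    rewrite (_ : xsection _ x = set0) ?measure0 //.
    by apply/seteqP; split => y //; rewrite /xsection /= in_setE.
  by rewrite /D1 /D2 /D3 !E !adde0 mule0.
- move=> A _; apply: sume_ge0 => i _; apply: mule_ge0; last exact: lam_ge0.
  by rewrite lee_fin rate_ge0.
- move=> F XF tF; rewrite /mu.
  have -> : (fun k => \sum_(0 <= j < k) \sum_(i < n)
       ((rate theta_a theta_d x.1 i)%:E * lam eta x i (F j)))%E =
    (fun k => \sum_(i < n) ((rate theta_a theta_d x.1 i)%:E *
       \sum_(0 <= j < k) lam eta x i (F j)))%E.
    apply/funext => k; rewrite exchange_big /=; apply: eq_bigr => i _.
    by rewrite ge0_sume_distrr // => j _; exact: lam_ge0.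
  apply: cvg_nnesum.
    move=> i _; apply: nearW => k; apply: mule_ge0; first by rewrite lee_fin rate_ge0.
    by apply: sume_ge0 => j _; exact: lam_ge0.
  move=> i _; apply: cvgeZl => //; exact: lam_cvg.
- rewrite /mu.
  transitivity (\sum_(i < n) (rate theta_a theta_d x.1 i)%:E)%E.
    by apply: eq_bigr => i _; rewrite lam_inX // mule1.
  by rewrite sumEFin rate_sum.
Qed.
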